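(* Let $k\geq 3$ be an integer such that $2k=p^{\alpha}+1\equiv 2 \pmod 4$ for some prime $p$ and non-negative integer $\alpha$. Then there exists a $(2k,k)$ complex equiangular tight frame.
   Context: An $(N,r)$ frame is a Parseval frame of $N$ vectors $f_1,\dots,f_N$ in $\mathbb{C}^r$ with the usual inner product, i.e. $\sum_{i=1}^N|\langle x,f_i\rangle|^2=\|x\|^2$ for all $x\in\mathbb{C}^r$. An $(N,r)$ complex equiangular tight frame (CETF) is an $(N,r)$ frame such that $\|f_i\|$ is the same for all $i$ and $|\langle f_i,f_j\rangle|$ is the same for all $i\neq j$. *)

(* Defs.v *)
From mathcomp Require Import all_boot all_order all_algebra.
From mathcomp Require Import reals complex.
Set Implicit Arguments. Unset Strict Implicit. Unset Printing Implicit Defensive.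
Import Order.TTheory GRing.Theory Num.Theory Num.Def.
Local Open Scope ring_scope.

Section Frames.
Variable C : numClosedFieldType.

Definition cinner (r : nat) (x y : 'I_r -> C) : C :=
  \sum_(j < r) x j * (y j)^*.

Definition cnorm2 (r : nat) (x : 'I_r -> C) : C := cinner x x.

Definition parseval_frame (N r : nat) (f : 'I_N -> 'I_r -> C) : Prop :=
  forall x : 'I_r -> C, \sum_(i < N) `|cinner x (f i)| ^+ 2 = cnorm2 x.

Definition CETF (N r : nat) (f : 'I_N -> 'I_r -> C) : Prop :=
  [/\ parseval_frame f,
      (exists c : C, forall i : 'I_N, sqrtC (cnorm2 (f i)) = c) &
      (exists a : C, forall i j : 'I_N, i != j -> `|cinner (f i) (f j)| = a)].
End Frames.

(* Main.v *)
Require Import Defs.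
From mathcomp Require Import all_boot all_order all_algebra.
From mathcomp Require Import reals complex.
From mathcomp Require Import all_field zify sesquilinear spectral.
Import Order.TTheory GRing.Theory Num.Theory.
Local Open Scope ring_scope.

Module Aux.
Import Num.Def.
Local Open Scope sesquilinear_scope.

Section Proj.
Variable C : numClosedFieldType.

Lemma proj_factor N k (P : 'M[C]_N) :
  P *m P = P -> P ^t* = P -> \tr P = k%:R ->
  exists W : 'M[C]_(k, N), W *m W ^t* = 1%:M /\ W ^t* *m W = P.
Proof.
move=> PP Ph trP.
have [r [W [WWt WP]]] : exists r (W : 'M[C]_(r, N)), W *m W ^t* = 1%:M /\ (W :=: P)%MS.
  exists (\rank P), (schmidt (row_base P)); split.
    by apply/eqP; apply: schmidt_unitarymx; exact: rank_leq_col.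
  by apply: eqmx_trans (eq_row_base P); apply: eqmx_schmidt_free; exact: row_base_free.
have WtW : W ^t* *m W = P.
  have [X hX] : exists X, W = X *m P by apply/submxP; rewrite WP.
  have [Y hY] : exists Y, P = Y *m W by apply/submxP; rewrite -WP.
  have h1 : W *m P = W by rewrite hX -mulmxA PP.
  have h2 : P *m W ^t* = W ^t*.
    by have := congr1 (fun M => M ^t*) h1; rewrite /= trmx_mul map_mxM Ph.
  have h3 : P *m W ^t* *m W = P.
    by rewrite {1}hY -!mulmxA (mulmxA W) WWt mul1mx.
  by rewrite -h3 h2.
have rk : r = k.
  by apply/eqP; rewrite -(eqr_nat C) -trP -WtW mxtrace_mulC WWt mxtrace1.
by subst r; exists W.
Qed.
End Proj.

Section Cetf.
Variable C : numClosedFieldType.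

Lemma cetf_of k N (W : 'M[C]_(k, N)) (P : 'M[C]_N) c a :
  W *m W ^t* = 1%:M -> W ^t* *m W = P ->
  (forall i, P i i = c) -> (forall i j, i != j -> `|P i j| = a) ->
  CETF (fun i j => W j i).
Proof.
move=> WWt WtW Pd Po.
have inE i j : cinner (fun l => W l i) (fun l => W l j) = P j i.
  by rewrite -WtW !mxE /cinner; apply: eq_bigr => l _; rewrite !mxE mulrC.
split.
- move=> x; rewrite /cnorm2 /cinner.
  under eq_bigr => i _ do rewrite normCK rmorph_sum big_distrl /=.
  under eq_bigr => i _ do under eq_bigr => j _ do rewrite big_distrr /=.
  rewrite exchange_big /=; apply: eq_bigr => j _.
  rewrite exchange_big /=.
  under eq_bigr => l _ do under eq_bigr => i _ do
     rewrite rmorphM /= conjCK (mulrC (x l)^*) mulrACA (mulrC (W j i)^*).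
  under eq_bigr => l _ do under eq_bigr => i _ do rewrite mulrACA.
  under eq_bigr => l _ do rewrite -big_distrr /=.
  have eW l : \sum_(i < N) W l i * (W j i)^* = (l == j)%:R.
    have := congr1 (fun M : 'M[C]_k => M l j) WWt; rewrite !mxE => <-.
    by apply: eq_bigr => i _; rewrite !mxE.
  under eq_bigr => l _ do rewrite eW.
  rewrite (bigD1 j) //= eqxx mulr1 big1 ?addr0 // => l lj.
  by rewrite (negbTE lj) mulr0.
- by exists (sqrtC c) => i; rewrite /cnorm2 inE Pd.
- by exists a => i j ij; rewrite inE Po // eq_sym.
Qed.
End Cetf.

Section Chi.
Variable F : finFieldType.
Hypothesis h2 : (2%:R : F) != 0.
Hypothesis h4 : (4 %| #|F|.-1)%N.

Let q := #|F|.
Let m := (q.-1)./2.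

Lemma m2 : (m * 2 = q.-1)%N.
Proof. rewrite /m; move: h4 => /dvdnP [t ->]; rewrite (_ : t * 4 = (t*2).*2)%N; last by rewrite -!mul2n; lia.
by rewrite doubleK; lia. Qed.

Lemma meven : ~~ odd m.
Proof. rewrite /m; move: h4 => /dvdnP [t ->]; rewrite (_ : t * 4 = (t*2).*2)%N; last by rewrite -!mul2n; lia.
by rewrite doubleK oddM /= andbF. Qed.

Lemma q_gt1 : (1 < q)%N.
Proof. exact: card_finNzRing_gt1. Qed.

Lemma expm2 (x : F) : x != 0 -> (x ^+ m) ^+ 2 = 1.
Proof.
move=> x0; rewrite -exprM m2; apply: (mulfI x0).
by rewrite mulr1 -exprS prednK ?expf_card //; exact: ltnW q_gt1.
Qed.

Lemma expm_pm (x : F) : x != 0 -> (x ^+ m == 1) || (x ^+ m == -1).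
Proof. by move=> x0; rewrite -sqrf_eq1 expm2. Qed.

Definition chi (x : F) : int := if x == 0 then 0 else if x ^+ m == 1 then 1 else -1.

Lemma chi0 : chi 0 = 0. Proof. by rewrite /chi eqxx. Qed.

Lemma one_neq_m1 : (1 : F) != -1.
Proof. by apply: contra h2 => /eqP e; rewrite mulr2n {2}e subrr. Qed.

Lemma chi_nz (x : F) : x != 0 -> chi x = if x ^+ m == 1 then 1 else -1.
Proof. by rewrite /chi => /negbTE ->. Qed.

Lemma chiM (x y : F) : chi (x * y) = chi x * chi y.
Proof.
have [->|x0] := eqVneq x 0; first by rewrite mul0r chi0 mul0r.
have [->|y0] := eqVneq y 0; first by rewrite mulr0 chi0 mulr0.
have xy0 : x * y != 0 by rewrite mulf_neq0.
rewrite !chi_nz // exprMn.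
have := expm_pm x x0; have := expm_pm y y0.
have := one_neq_m1 => ne.
have nm : ((-1 : F) == 1) = false by rewrite eq_sym (negbTE ne).
by case/orP => /eqP -> /orP [] /eqP ->; rewrite ?mulr1 ?mul1r ?mulrNN ?mulr1 ?mulrN1 ?mulN1r ?opprK ?eqxx ?nm.
Qed.

Lemma chi1 : chi 1 = 1. Proof. by rewrite chi_nz ?oner_eq0 // expr1n eqxx. Qed.

Lemma chiN1 : chi (-1) = 1.
Proof.
rewrite chi_nz ?oppr_eq0 ?oner_eq0 // -signr_odd (negbTE meven) expr0 eqxx //.
Qed.

Lemma chiN (x : F) : chi (- x) = chi x.
Proof. by rewrite -mulN1r chiM chiN1 mul1r. Qed.

Lemma chi_sq (x : F) : x != 0 -> chi x * chi x = 1.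
Proof. by move=> x0; rewrite chi_nz //; case: ifP. Qed.

Lemma m_gt0 : (0 < m)%N.
Proof. have := m2; have := q_gt1; lia. Qed.

Lemma exists_nonsq : exists g : F, chi g = -1.
Proof.
case: (pickP (fun g => chi g == -1)) => [g /eqP hg|H]; first by exists g.
exfalso.
have allr : all (root ('X^m - 1)) (enum (predC1 (0 : F))).
  apply/allP => x; rewrite mem_enum /= => x0.
  have := H x; rewrite /= chi_nz //; case: (x ^+ m =P 1) => /= [e _|_ //].
  by rewrite /root !hornerE e subrr.
have := max_poly_roots _ allr (enum_uniq _).
rewrite size_XnsubC ?m_gt0 // -cardE cardC1 -/q -m2 ?monic_neq0 ?monicXnsubC ?m_gt0 //.
move=> /(_ isT) /=; have := m_gt0; lia.
Qed.

Lemma sum_chi : \sum_(x : F) chi x = 0.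
Proof.
have [g hg] := exists_nonsq.
have g0 : g != 0 by apply/eqP => g0; move: hg; rewrite g0 chi0.
have e : \sum_(x : F) chi x = - \sum_(x : F) chi x.
  rewrite {1}(reindex_inj (mulfI g0)) /=.
  by under eq_bigr => x _ do rewrite chiM hg mulN1r; rewrite sumrN.
move: e; set S := \sum_(x : F) chi x => e; lia.
Qed.

Lemma sum_shift (c : F) : c != 0 -> \sum_(z : F) chi z * chi (z + c) = -1.
Proof.
move=> c0.
have pt z : chi z * chi (z + c) = chi (1 + c * z^-1) - (z == 0)%:Z.
  have [->|z0] := eqVneq z 0; first by rewrite chi0 mul0r invr0 mulr0 addr0 chi1.
  rewrite subr0.
  have -> : z + c = z * (1 + c * z^-1) by rewrite mulrDr mulr1 mulrCA mulfV // mulr1.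
  by rewrite chiM mulrA chi_sq // mul1r.
under eq_bigr => z _ do rewrite pt.
rewrite sumrB.
have inj : injective (fun z : F => 1 + c * z^-1).
  by move=> a b /addrI /(mulfI c0) /invr_inj.
have -> : \sum_(z : F) chi (1 + c * z^-1) = \sum_(z : F) chi z.
  by rewrite [RHS](reindex_inj inj).
rewrite sum_chi (bigD1 0) //= eqxx big1 ?addr0 //.
by move=> z /negbTE ->.
Qed.

Lemma big_optionF (f : option F -> int) :
  \sum_(o : option F) f o = f None + \sum_(x : F) f (Some x).
Proof.
rewrite (bigD1 None) //=; congr (_ + _).
rewrite (reindex (@Some F)) //=.
exists (fun o => odflt 0 o) => // -[x|] //=.
Qed.

Definition Qe (a b : option F) : int :=
  match a, b with
  | None, None => 0
  | None, Some _ => 1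
  | Some _, None => 1
  | Some x, Some y => chi (x - y)
  end.

Lemma Qe_sym a b : Qe a b = Qe b a.
Proof. by case: a b => [x|] [y|] //=; rewrite -chiN opprB. Qed.

Lemma Qe_diag a : Qe a a = 0.
Proof. by case: a => [x|] //=; rewrite subrr chi0. Qed.

Lemma Qe_pm a b : a != b -> Qe a b = 1 \/ Qe a b = -1.
Proof.
case: a b => [x|] [y|] //= ab; auto.
have : x - y != 0 by rewrite subr_eq0; apply: contraNneq ab => ->.
move=> /chi_sq; case: (chi (x - y)) => [[|[|n]]|n] //= e; auto; lia.
Qed.

Lemma sum_chi_sq (x : F) : \sum_(y : F) chi (x - y) * chi (x - y) = #|F|.-1%:Z.
Proof.
rewrite (bigD1 x) //= subrr chi0 mul0r add0r.
under eq_bigr => y yx do rewrite chi_sq ?subr_eq0 1?eq_sym //.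
rewrite sumr_const natz -(cardC1 x); congr Posz; exact: eq_card.
Qed.

Lemma sum_chi_sub (x : F) : \sum_(z : F) chi (x - z) = 0.
Proof.
have inj : injective (fun z : F => x - z) by move=> a b /addrI /oppr_inj.
rewrite -[RHS]sum_chi (reindex_inj inj) /=; apply: eq_bigr => z _; by rewrite subKr.
Qed.

Lemma Qe_sq a b : \sum_(c : option F) Qe a c * Qe c b = (a == b)%:Z * #|F|%:Z.
Proof.
rewrite big_optionF.
case: a b => [x|] [y|] /=.
- rewrite mul1r.
  under eq_bigr => z _ do rewrite -(chiN (z - y)) opprB.
  have [<-|xy] := eqVneq x y.
    rewrite sum_chi_sq eqxx mul1r.
    have := card_finNzRing_gt1 F; case: #|F| => // n _ /=; rewrite -addn1 PoszD addrC //=.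
  have inj : injective (fun z : F => x - z) by move=> a b /addrI /oppr_inj.
  rewrite (reindex_inj inj) /=.
  under eq_bigr => z _ do rewrite opprB addrC subrK (addrC y) -addrA addrC.
  under eq_bigr => z _ do rewrite (addrC _ z).
  rewrite sum_shift; last by rewrite addrC subr_eq0 eq_sym.
  rewrite addrN.
  have -> : (Some x == Some y) = false by apply/eqP => -[e]; rewrite e eqxx in xy.
  by [].
- by rewrite mulr0 add0r; under eq_bigr => z _ do rewrite mulr1; rewrite sum_chi_sub.
  rewrite mul0r add0r mul0r; under eq_bigr => z _ do rewrite mul1r -(chiN (z - y)) opprB.
  by rewrite sum_chi_sub.
- rewrite mul0r add0r !mul1r.
  by rewrite sumr_const natz.
Qed.
End Chi.
Section Paley.
Variable C : numClosedFieldType.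
Variable F : finFieldType.
Hypothesis h2 : (2%:R : F) != 0.
Hypothesis h4 : (4 %| #|F|.-1)%N.
Variable k : nat.
Hypothesis hk : (2 * k = #|F|.+1)%N.

Let N := (2 * k)%N.
Let E : N = #|{: option F}| := etrans hk (esym (card_option F)).
Let e (i : 'I_N) : option F := enum_val (cast_ord E i).
Let einv (o : option F) : 'I_N := cast_ord (esym E) (enum_rank o).

Lemma e_bij : bijective e.
Proof.
exists einv => [i|o]; rewrite /e /einv.
  by rewrite enum_valK; apply: val_inj.
by rewrite cast_ordKV enum_rankK.
Qed.

Lemma e_inj : injective e. Proof. exact: bij_inj e_bij. Qed.

Lemma sum_e (V : nmodType) (G : option F -> V) : \sum_(i < N) G (e i) = \sum_(o : option F) G o.
Proof. by rewrite [RHS](reindex e) //; apply: onW_bij; exact: e_bij. Qed.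

Lemma intr_sum I (r : seq I) (P : pred I) (f : I -> int) :
  (\sum_(i <- r | P i) f i)%:~R = \sum_(i <- r | P i) (f i)%:~R :> C.
Proof. by apply: (big_morph (fun z : int => z%:~R : C)) => [x y|]; rewrite ?intrD. Qed.

Definition Qm : 'M[C]_N := \matrix_(i, j) (Qe F (e i) (e j))%:~R.

Lemma Qm2 : Qm *m Qm = (#|F|%:R : C)%:M.
Proof.
apply/matrixP => i j; rewrite !mxE.
under eq_bigr => l _ do rewrite !mxE -intrM.
rewrite -intr_sum.
have -> := @sum_e _ (fun o => Qe F (e i) o * Qe F o (e j) : int).
rewrite Qe_sq // (inj_eq e_inj) intrM.
by case: (i == j); rewrite /= ?mulr1n ?mulr0n ?mul1r ?mul0r.
Qed.

Let s : C := sqrtC (#|F|%:R).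
Lemma s2 : s * s = #|F|%:R. Proof. by rewrite -expr2 sqrtCK. Qed.
Lemma s_ge0 : 0 <= s. Proof. by rewrite sqrtC_ge0 ler0n. Qed.
Lemma s_neq0 : s != 0.
Proof. by rewrite sqrtC_eq0 pnatr_eq0 -lt0n (ltnW (card_finNzRing_gt1 F)). Qed.
Lemma sc : s^* = s. Proof. by apply: conj_Creal; apply: ger0_real; exact: s_ge0. Qed.

Definition Pm : 'M[C]_N := 2^-1 *: (1%:M + s^-1 *: Qm).

Lemma PmE i j : Pm i j = 2^-1 * ((i == j)%:R + s^-1 * (Qe F (e i) (e j))%:~R).
Proof. by rewrite !mxE. Qed.

Lemma PP : Pm *m Pm = Pm.
Proof.
have h : (1%:M + s^-1 *: Qm) *m (1%:M + s^-1 *: Qm) = 2%:R *: (1%:M + s^-1 *: Qm).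
  rewrite mulmxDl !mulmxDr !mul1mx mulmx1 -scalemxAl -scalemxAr scalerA Qm2.
  rewrite scale_scalar_mx -invfM s2 mulVf ?pnatr_eq0 -?lt0n ?(ltnW (card_finNzRing_gt1 F)) //.
  by rewrite scaler_nat mulr2n (addrC (s^-1 *: Qm) 1%:M).
rewrite /Pm -scalemxAl -scalemxAr h !scalerA.
by rewrite divfK // pnatr_eq0.
Qed.

Lemma Ph : Pm ^t* = Pm.
Proof.
apply/matrixP => i j; rewrite !mxE.
rewrite !(rmorphM, rmorphD, rmorphMn, rmorph1, fmorphV, rmorph_int, rmorph_nat) /= sc.
by rewrite eq_sym Qe_sym.
Qed.

Lemma trP : \tr Pm = k%:R.
Proof.
rewrite /mxtrace; under eq_bigr => i _ do rewrite PmE eqxx Qe_diag mulr0 addr0 mulr1.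
rewrite sumr_const card_ord /N mulrnA.
have -> : (2^-1 : C) *+ 2 = 1 by rewrite -[RHS](@mulVf _ 2) ?pnatr_eq0 // mulr_natr.
by [].
Qed.

Lemma Po i j : i != j -> `|Pm i j| = 2^-1 * s^-1.
Proof.
move=> ij; rewrite PmE (negbTE ij) add0r.
have : e i != e j by rewrite (inj_eq e_inj).
have n2 : `|(2^-1 : C)| = 2^-1 by rewrite ger0_norm // invr_ge0 ler0n.
have ns : `|s^-1| = s^-1 by rewrite ger0_norm // invr_ge0 s_ge0.
by move=> /(@Qe_pm F h2 h4) [] ->; rewrite ?mulrN1 ?mulr1 ?mulrN ?normrN normrM ns n2.
Qed.

Lemma paley_cetf : exists f : 'I_N -> 'I_k -> C, CETF f.
Proof.
have [W [h1 h2']] := @proj_factor C _ _ _ PP Ph trP.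
exists (fun i j => W j i); apply: (@cetf_of C _ _ W Pm (2^-1) (2^-1 * s^-1) h1 h2').
  by move=> i; rewrite PmE eqxx Qe_diag mulr0 addr0 mulr1.
exact: Po.
Qed.
End Paley.

End Aux.

Theorem theorem6 (R : realType) (k : nat) :
  (3 <= k)%N ->
  (exists (p alpha : nat), prime p /\ (2 * k = p ^ alpha + 1)%N /\ (2 * k = 2 %[mod 4])%N) ->
  exists f : 'I_(2 * k) -> 'I_k -> R[i], CETF f.
Proof.
move=> k3 [p [a [pp [hk hm]]]].
have a0 : (0 < a)%N.
  case: a hk {hm} => // ; rewrite expn0; lia.
have [F pF cF] := pPrimePowerField pp a0.
have p2 : p != 2%N.
  apply/eqP => p2; subst p; move: hk; rewrite -(prednK a0) expnS; lia.
have h2 : (2%:R : F) != 0.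
  by rewrite -(dvdn_pcharf pF) dvdn_prime2 //.
have h4 : (4 %| #|F|.-1)%N.
  rewrite cF; move: hm hk; lia.
have hk' : (2 * k = #|F|.+1)%N by rewrite cF hk addn1.
exact: (@Aux.paley_cetf _ F h2 h4 k hk').
Qed.
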